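(* Let $m,m'\geq 0$ and $i>0$ be integers. Let $h(t)$ be a rational polynomial of degree at most $m+1$ with $h(t)=t^{m+1}h(1/t)$, and $h'(t)$ a rational polynomial of degree at most $m'+1$ with $h'(t)=t^{m'+1}h'(1/t)$. If $g^{(m,i)}(h(t))\geq 0$ and $g^{(m',i)}(h'(t))\geq 0$ componentwise, then $g^{(m+m'+1,i)}(h(t)h'(t))\geq 0$ componentwise.
   Context: For integers $d\geq 0$ and $i>0$, let $q\geq 0$, $1\leq r\leq i$ be the unique integers with $d+1=qi+r$ and define $P_{d,i}(t)=(1+t+\cdots+t^i)^q(1+t+\cdots+t^r)$; also set $P_{-1,i}(t)=1$. Let $B_{d,i}$ be the ordered list $\big(P_{d,i}(t),\ tP_{d-2,i}(t),\ldots,\ t^{\lfloor (d+1)/2\rfloor}P_{d-2\lfloor (d+1)/2\rfloor,i}(t)\big)$, a basis of the $\mathbb{Q}$-vector space of polynomials of degree at most $d+1$ satisfying $h(t)=t^{d+1}h(1/t)$. For such $h$, $g^{(d,i)}(h(t))=(g_0,\ldots,g_{\lfloor (d+1)/2\rfloor})$ is the vector of coefficients with $h(t)=\sum_j g_j t^jP_{d-2j,i}(t)$. *)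

(* Defs.v *)
From HB Require Import structures.
From mathcomp Require Import all_boot all_order all_algebra.
Set Implicit Arguments. Unset Strict Implicit. Unset Printing Implicit Defensive.
Import Order.TTheory GRing.Theory Num.Theory.
Local Open Scope ring_scope.

Definition geomP (i : nat) : {poly rat} := \sum_(k < i.+1) 'X^k.

(* PP n i = P_{n-1,i}(t).  PP 0 i = P_{-1,i} = 1; for n = d+1 >= 1,
   n = q*i + r with 1 <= r <= i, i.e. q = (n-1) %/ i, r = (n-1) %% i + 1. *)
Definition PP (n i : nat) : {poly rat} :=
  if n is n'.+1 then geomP i ^+ (n' %/ i)%N * geomP ((n' %% i).+1)
  else 1.

Definition Pdi (d i : nat) : {poly rat} := PP d.+1 i.

(* h(t) = t^{d+1} h(1/t) with deg h <= d+1, written on coefficients *)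
Definition palindromic (d : nat) (h : {poly rat}) : Prop :=
  (size h <= d.+2)%N /\ forall k : nat, (k <= d.+1)%N -> h`_k = h`_(d.+1 - k).

(* g is the coefficient vector (g_0,...,g_{floor((d+1)/2)}) of h in the basis
   B_{d,i} = (t^j P_{d-2j,i}(t))_j ; note t^j P_{d-2j,i} = 'X^j * PP (d+1-2j) i. *)
Definition is_gvec (d i : nat) (h : {poly rat}) (g : seq rat) : Prop :=
  size g = (d.+1)./2.+1 /\
  h = \sum_(j < size g) g`_j *: ('X^j * PP (d.+1 - j.*2) i).

Definition nonneg_vec (g : seq rat) : bool := all (fun x => 0 <= x) g.

(* Main.v *)
Require Import Defs.
From HB Require Import structures.
From mathcomp Require Import all_boot all_order all_algebra.
Import Order.TTheory GRing.Theory Num.Theory.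
Local Open Scope ring_scope.
From Stdlib Require Import Lia.
Ltac nlia :=
  repeat rewrite <- addnn in *;
  repeat match goal with
  | H : is_true (leq _ _) |- _ => move/ssrnat.leP: H => H
  | H : is_true (@eq_op _ _ _) |- _ => move/eqP: H => H
  end;
  try match goal with
  | |- is_true (leq _ _) => apply/ssrnat.leP
  | |- is_true (@eq_op _ _ _) => apply/eqP
  end;
  repeat rewrite <- ?plusE, <- ?minusE, <- ?multE in *; lia.

Lemma geomP0 : geomP 0 = 1.
Proof. by rewrite /geomP big_ord1 expr0. Qed.

Lemma geomPS n : geomP n.+1 = geomP n + 'X^(n.+1).
Proof. by rewrite /geomP big_ord_recr. Qed.

Lemma geomP_split p q : geomP (p + q).+1 = geomP p + 'X^(p.+1) * geomP q.
Proof.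
elim: q => [|q IH]; first by rewrite addn0 geomP0 mulr1 geomPS.
rewrite addnS geomPS IH geomPS mulrDr -addrA; congr (_ + _).
by rewrite -exprD addSn addnS.
Qed.

Lemma L1 i Q s : (0 < i)%N -> (s <= i)%N ->
  geomP i ^+ Q * geomP s = PP (Q * i + s) i.
Proof.
move=> hi hs.
case: s hs => [|s] hs.
  case: Q => [|Q]; first by rewrite mul0n /= expr0 geomP0 mulr1.
  rewrite addn0 mulSn.
  case: i hi hs => [|i'] // hi _.
  have -> : (i'.+1 + Q * i'.+1 = (Q * i'.+1 + i').+1)%N by nlia.
  rewrite /PP divnMDl // modnMDl divn_small ?modn_small //.
  by rewrite addn0 geomP0 mulr1 exprSr.
rewrite addnS /PP divnMDl // modnMDl divn_small ?modn_small ?addn0 //.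
Qed.

Lemma ring_id (R : comNzRingType) (gx gc u v : R) :
  (gx + u) * (gc + v * gx) = gx * (gc + v * gx + u * v) + u * gc.
Proof.
rewrite !mulrDl !mulrDr -!addrA; congr (_ + _).
congr (_ + _); rewrite addrC; congr (_ + _).
by rewrite mulrA mulrC.
Qed.

Lemma step x b : (x < b)%N ->
  geomP x.+1 * geomP b = geomP x * geomP b.+1 + 'X^(x.+1) * geomP (b - x.+1).
Proof.
move=> hxb.
have e1 : geomP x.+1 = geomP x + 'X^(x.+1) by rewrite geomPS.
have e2 : geomP b = geomP (b - x.+1) + 'X^(b - x) * geomP x.
  have hb : b = ((b - x.+1) + x).+1 by nlia.
  rewrite {1}hb geomP_split; by congr (_ + 'X^_ * _); nlia.
have e3 : geomP b.+1 = geomP b + 'X^(x.+1) * 'X^(b - x).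
  by rewrite geomPS -exprD; congr (_ + 'X^_); nlia.
rewrite e3 e1 e2 ring_id; by congr (_ * _ + _).
Qed.

Inductive Cone (i N : nat) : {poly rat} -> Prop :=
| Cone0 : Cone i N 0
| ConeB l : (l.*2 <= N)%N -> Cone i N ('X^l * PP (N - l.*2) i)
| ConeD p q : Cone i N p -> Cone i N q -> Cone i N (p + q)
| ConeZ (a : rat) p : 0 <= a -> Cone i N p -> Cone i N (a *: p).

Lemma ConeB' i N l M : (l.*2 <= N)%N -> M = (N - l.*2)%N ->
  Cone i N ('X^l * PP M i).
Proof. by move=> h ->; apply: ConeB. Qed.

Lemma ConeP i N : Cone i N (PP N i).
Proof. by rewrite -[PP N i]mul1r -(expr0 'X) -{2}(subn0 N); apply: ConeB. Qed.

Lemma Cone_shift i N p k : Cone i N p -> Cone i (N + k.*2) ('X^k * p).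
Proof.
elim=> [|l hl|p1 q _ IH1 _ IH2|a p1 ha _ IH].
- by rewrite mulr0; apply: Cone0.
- rewrite mulrA -exprD; apply: ConeB'; nlia.
- by rewrite mulrDr; apply: ConeD.
- by rewrite -scalerAr; apply: ConeZ.
Qed.

Lemma Cone_sum i N (I : Type) (r : seq I) (P : pred I) (F : I -> {poly rat}) :
  (forall x, P x -> Cone i N (F x)) -> Cone i N (\sum_(x <- r | P x) F x).
Proof.
move=> H; apply: (big_ind (Cone i N)); [exact: Cone0 | exact: ConeD | exact: H].
Qed.

Lemma ConeG i Q x y : (0 < i)%N -> (x <= y)%N -> (y <= i)%N ->
  Cone i (Q * i + x + y) (geomP i ^+ Q * (geomP x * geomP y)).
Proof.
move=> hi; elim: x y => [|x IH] y hxy hyi.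
  by rewrite geomP0 mul1r L1 // addn0; apply: ConeP.
case: (ltnP y i) => hyi'.
- rewrite step // mulrDr; apply: ConeD.
  + have -> : (Q * i + x.+1 + y = Q * i + x + y.+1)%N by nlia.
    by apply: IH => //; nlia.
  + rewrite mulrCA L1 //; last by nlia.
    apply: ConeB'; nlia.
- have -> : y = i by nlia.
  rewrite mulrA mulrAC -exprSr L1 //; last by nlia.
  have -> : (Q * i + x.+1 + i = Q.+1 * i + x.+1)%N by rewrite mulSn; nlia.
  exact: ConeP.
Qed.

Lemma PP_dec i a : (0 < i)%N -> PP a i = geomP i ^+ (a %/ i) * geomP (a %% i).
Proof.
move=> hi; rewrite L1 -?divn_eq //.
by apply: ltnW; rewrite ltn_pmod.
Qed.

Lemma ConePP i a b : (0 < i)%N -> Cone i (a + b) (PP a i * PP b i).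
Proof.
move=> hi; rewrite !PP_dec // mulrACA -exprD.
have ha : (a %% i <= i)%N by apply: ltnW; rewrite ltn_pmod.
have hb : (b %% i <= i)%N by apply: ltnW; rewrite ltn_pmod.
have -> : (a + b = (a %/ i + b %/ i) * i + a %% i + b %% i)%N.
  by rewrite {1}(divn_eq a i) {1}(divn_eq b i) mulnDl; nlia.
case: (leqP (a %% i) (b %% i)) => h; first exact: ConeG.
rewrite (mulrC (geomP (a %% i))) -(addnA _ (a %% i)%N) (addnC (a %% i)%N) addnA.
by apply: ConeG => //; apply: ltnW.
Qed.

Lemma geomP_coef0 k : (geomP k)`_0 = 1.
Proof.
rewrite /geomP coef_sum big_ord_recl coefXn eqxx big1 ?addr0 //.
by move=> j _; rewrite coefXn.
Qed.

Lemma PP_coef0 n i : (PP n i)`_0 = 1.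
Proof.
case: n => [|n] /=; first by rewrite coef1.
rewrite coef0M geomP_coef0 mulr1.
elim: (n %/ i)%N => [|q IH]; first by rewrite expr0 coef1.
by rewrite exprS coef0M IH geomP_coef0 mulr1.
Qed.

Definition bas i N l : {poly rat} := 'X^l * PP (N - l.*2) i.

Lemma Cone_rep i N p : Cone i N p -> exists c : nat -> rat,
  (forall l, 0 <= c l) /\ p = \sum_(l < N./2.+1) c l *: bas i N l.
Proof.
elim=> [|l hl|p1 q _ [c1 [h1 e1]] _ [c2 [h2 e2]]|a p1 ha _ [c1 [h1 e1]]].
- exists (fun _ => 0); split=> // ; by rewrite big1 // => k _; rewrite scale0r.
- exists (fun k => if k == l then 1 else 0); split.
    by move=> k; case: (k == l).
  have hl' : (l < N./2.+1)%N by rewrite ltnS geq_half_double.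
  rewrite (bigD1 (Ordinal hl')) //= eqxx scale1r big1 ?addr0 //.
  move=> k hk; rewrite ifF ?scale0r //.
  apply/eqP => ek; move/eqP: hk; apply; exact: val_inj.
- exists (fun l => c1 l + c2 l); split.
    by move=> l; apply: addr_ge0.
  by rewrite e1 e2 -big_split /=; apply: eq_bigr => l _; rewrite scalerDl.
- exists (fun l => a * c1 l); split.
    by move=> l; apply: mulr_ge0.
  by rewrite e1 scaler_sumr; apply: eq_bigr => l _; rewrite scalerA.
Qed.

Lemma basis_indep i N n (e : nat -> rat) :
  \sum_(l < n) e l *: bas i N l = 0 -> forall l, (l < n)%N -> e l = 0.
Proof.
move=> H l; elim/ltn_ind: l => k IH hk.
have := congr1 (fun p : {poly rat} => p`_k) H.
rewrite /= coef0 coef_sum (bigD1 (Ordinal hk)) //= coefZ /bas coefXnM ltnn subnn.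
rewrite PP_coef0 mulr1 big1 ?addr0 // => l hl.
rewrite coefZ coefXnM; case: ltnP => // hlk; first by rewrite mulr0.
have hl' : (l < k)%N.
  rewrite ltn_neqAle hlk andbT; apply/eqP => ek; move/eqP: hl; apply.
  exact: val_inj.
by rewrite IH // mul0r.
Qed.

Theorem proposition4p1 (m m' i : nat) (hi : (0 < i)%N) (h h' : {poly rat}) :
  palindromic m h -> palindromic m' h' ->
  (exists g, is_gvec m i h g /\ nonneg_vec g) ->
  (exists g', is_gvec m' i h' g' /\ nonneg_vec g') ->
  forall G, is_gvec (m + m' + 1) i (h * h') G -> nonneg_vec G.
Proof.
move=> _ _ [g [[sg eg] ng]] [g' [[sg' eg'] ng']] G [sG eG].
set N := (m + m' + 1).+1.
have hC : Cone i N (h * h').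
  rewrite eg eg' mulr_suml; apply: Cone_sum => j _; rewrite mulr_sumr.
  apply: Cone_sum => k _.
  rewrite -scalerAl -scalerAr scalerA; apply: ConeZ.
    by apply: mulr_ge0; [apply: (all_nthP 0 ng) | apply: (all_nthP 0 ng')].
  rewrite mulrACA -exprD.
  have hj : (j.*2 <= m.+1)%N by rewrite -geq_half_double -ltnS -sg.
  have hk : (k.*2 <= m'.+1)%N by rewrite -geq_half_double -ltnS -sg'.
  have -> : N = ((m.+1 - j.*2) + (m'.+1 - k.*2) + (j + k)%N.*2)%N
    by rewrite /N; nlia.
  by apply: Cone_shift; apply: ConePP.
have [c [hc ec]] := @Cone_rep _ _ _ hC.
apply/(all_nthP 0) => l hl.
rewrite sG in eG hl.
have e0 : \sum_(l < N./2.+1) (G`_l - c l) *: bas i N l = 0.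
  rewrite (eq_bigr (fun l : 'I_N./2.+1 => G`_l *: bas i N l - c l *: bas i N l));
    last by move=> k _; rewrite scalerBl.
  by rewrite sumrB -ec /bas -eG subrr.
have := @basis_indep i N N./2.+1 (fun l => G`_l - c l) e0 l hl; move/eqP; rewrite subr_eq0 => /eqP ->.
exact: hc.
Qed.
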